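(* Let $\mathscr G=(\mathscr V,\mathscr E)$ be a finite connected graph with $N$ vertices and $M\ge0$ an integer. The uniform saving model $(Z_t)$ on $\mathscr C_{N,M}$ has a unique stationary distribution $\pi_Z$, and $$\lim_{t\to\infty}P_\eta(Z_t=\xi)=\pi_Z(\xi)\quad\text{for all }\xi,\eta\in\mathscr C_{N,M},$$ where $P_\eta$ denotes the law of the process started from $Z_0=\eta$.
   Context: $\mathscr C_{N,M}$ is the set of maps $\xi:\mathscr V\to\mathbb N$ with $\sum_x\xi(x)=M$. The uniform saving model is the discrete-time Markov chain on $\mathscr C_{N,M}$: at each step an edge $(x,y)\in\mathscr E$ is chosen uniformly at random; independent $U_1$ uniform on $\{0,\dots,Z_t(x)\}$ and $U_2$ uniform on $\{0,\dots,Z_t(y)\}$ are drawn; given $U_1=c_x,U_2=c_y$, $U$ is drawn uniformly from $\{0,\dots,Z_t(x)+Z_t(y)-c_x-c_y\}$; then $Z_{t+1}(x)=c_x+U$, $Z_{t+1}(y)=Z_t(x)+Z_t(y)-c_x-U$, $Z_{t+1}(z)=Z_t(z)$ for $z\notin\{x,y\}$. *)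

(* Defs.v *)
From HB Require Import structures.
From mathcomp Require Import all_boot all_order all_algebra.
From mathcomp Require Import all_classical all_reals topology normedtype sequences.
Set Implicit Arguments. Unset Strict Implicit. Unset Printing Implicit Defensive.
Import Order.TTheory GRing.Theory Num.Theory.
Local Open Scope ring_scope.

(* C_{N,M}: maps xi : V -> N with sum M (values are automatically <= M,
   so we take them in 'I_M.+1 to get a finite type). *)
Definition config (V : finType) (M : nat) : finType :=
  {f : {ffun V -> 'I_M.+1} | (\sum_(x : V) (f x : nat))%N == M}.

Definition cval (V : finType) (M : nat) (xi : config V M) (x : V) : nat :=
  nat_of_ord (val xi x).

(* The configuration after the update on edge (x,y) with kept amounts cx
   and redistributed amount u:  xi'(x) = cx + u,
   xi'(y) = eta(x)+eta(y)-cx-u, xi'(z) = eta(z) otherwise. *)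
Definition is_update (V : finType) (M : nat) (eta xi : config V M)
    (x y : V) (cx u : nat) : bool :=
  [forall z : V, cval xi z ==
     (if z == x then (cx + u)%N
      else if z == y then (cval eta x + cval eta y - cx - u)%N
      else cval eta z)].

(* One-step transition probability of the uniform saving model: an edge
   (ordered pair (x,y) with e x y) uniformly at random, U1 uniform on
   {0..eta x}, U2 uniform on {0..eta y}, U uniform on
   {0..eta x + eta y - U1 - U2}. If there is no edge (only possible when
   N = 1, where the state space is a singleton) the chain stays put. *)
Definition usm_step (R : realType) (V : finType) (e : rel V) (M : nat)
    (eta xi : config V M) : R :=
  let nE := #|[pred p : V * V | e p.1 p.2]| in
  if nE == 0%N then (eta == xi)%:R else
  nE%:R^-1 * \sum_(p : V * V | e p.1 p.2)
    let a := cval eta p.1 in let b := cval eta p.2 in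
    \sum_(cx < a.+1) \sum_(cy < b.+1)
      (a.+1%:R^-1 * b.+1%:R^-1 *
        let r := (a + b - cx - cy)%N in
        \sum_(u < r.+1) r.+1%:R^-1 * (is_update eta xi p.1 p.2 cx u)%:R).

Fixpoint usm_law (R : realType) (V : finType) (e : rel V) (M : nat)
    (t : nat) (eta xi : config V M) : R :=
  match t with
  | 0%N => (eta == xi)%:R
  | t'.+1 => \sum_(zeta : config V M)
               usm_law R e t' eta zeta * usm_step R e zeta xi
  end.

Definition usm_stationary (R : realType) (V : finType) (e : rel V) (M : nat)
    (pi : config V M -> R) : Prop :=
  (forall xi, 0 <= pi xi) /\ \sum_(xi : config V M) pi xi = 1 /\
  (forall xi, \sum_(eta : config V M) pi eta * usm_step R e eta xi = pi xi).

(* Main.v *)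
Require Import Defs.
From HB Require Import structures.
From mathcomp Require Import all_boot all_order all_algebra.
From mathcomp Require Import all_classical all_reals topology normedtype sequences.
From mathcomp Require Import zify ring lra.
Import Order.TTheory GRing.Theory Num.Theory numFieldNormedType.Exports.
Local Open Scope classical_set_scope. Local Open Scope ring_scope.
Set Implicit Arguments. Unset Strict Implicit. Unset Printing Implicit Defensive.


Lemma cval_inj (V : finType) (M : nat) (a b : config V M) :
  (forall z, cval a z = cval b z) -> a = b.
Proof.
move=> h; apply: val_inj; apply/ffunP => z; apply: ord_inj; exact: h.
Qed.

Lemma cval_sum (V : finType) (M : nat) (a : config V M) :
  (\sum_(z : V) cval a z)%N = M.
Proof. by case: a => f hf; apply/eqP. Qed.

Lemma cval_le2 (V : finType) (M : nat) (a : config V M) x y :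
  x != y -> (cval a x + cval a y <= M)%N.
Proof.
move=> hxy; rewrite -{3}(cval_sum a) (bigD1 x) //= (bigD1 y) //=.
  by rewrite addnA leq_addr. by rewrite eq_sym.
Qed.

Lemma cval_le (V : finType) (M : nat) (a : config V M) x : (cval a x <= M)%N.
Proof. rewrite -ltnS; exact: ltn_ord. Qed.

Lemma split2 (V : finType) (f : V -> nat) x y : x != y ->
  (\sum_z f z = f x + f y + \sum_(z | (z != x) && (z != y)) f z)%N.
Proof.
move=> hxy; rewrite (bigD1 x) //= (bigD1 y) /=; last by rewrite eq_sym.
rewrite addnA; congr (_ + _)%N; apply: eq_bigl => z; by rewrite andbC.
Qed.

Lemma sum2 (V : finType) (f g : V -> nat) x y : x != y ->
  (f x + f y = g x + g y)%N -> (forall z, z != x -> z != y -> f z = g z) ->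
  (\sum_z f z = \sum_z g z)%N.
Proof.
move=> hxy hs ho; rewrite (split2 f hxy) (split2 g hxy) hs; congr (_ + _)%N.
apply: eq_bigr => z /andP [hzx hzy]; exact: ho.
Qed.

Definition mk (V : finType) (M : nat) (eta : config V M) (x y : V) (vx vy : nat)
  : config V M :=
  insubd eta [ffun z => inord (if z == x then vx else if z == y then vy
                               else cval eta z) : 'I_M.+1].

Lemma cval_mk (V : finType) (M : nat) (eta : config V M) x y vx vy z :
  x != y -> (vx + vy = cval eta x + cval eta y)%N ->
  cval (mk eta x y vx vy) z =
    if z == x then vx else if z == y then vy else cval eta z.
Proof.
move=> hxy hs.
have hb : forall w, ((if w == x then vx else if w == y then vy else cval eta w) <= M)%N.
  move=> w; have := cval_le2 eta hxy; rewrite -hs => h.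
  case: ifP => _; first by apply: leq_trans h; apply: leq_addr.
  case: ifP => _; first by apply: leq_trans h; apply: leq_addl.
  exact: cval_le.
have hP : (\sum_(w : V) ([ffun z => inord (if z == x then vx else if z == y then vy
                               else cval eta z) : 'I_M.+1] w : nat))%N == M.
  apply/eqP; apply: (eq_trans _ (cval_sum eta)); set F := [ffun z => _].
  apply: (sum2 hxy); rewrite /F.
  - by rewrite !ffunE !inordK ?ltnS ?hb // eqxx eq_sym (negbTE hxy) eqxx.
  - move=> w hwx hwy; by rewrite ffunE inordK ?ltnS ?hb // (negbTE hwx) (negbTE hwy).
rewrite /cval /mk insubdK // ffunE inordK // ltnS; exact: hb.
Qed.


Lemma is_updateP (V : finType) (M : nat) (eta xi : config V M) x y cx u :
  reflect (forall z, cval xi z = if z == x then (cx + u)%N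
      else if z == y then (cval eta x + cval eta y - cx - u)%N
      else cval eta z) (is_update eta xi x y cx u).
Proof.
apply: (iffP forallP) => h z; first exact/eqP.
exact/eqP.
Qed.

Lemma upd_uniq (V : finType) (M : nat) (eta xi xi' : config V M) x y cx u :
  is_update eta xi x y cx u -> is_update eta xi' x y cx u -> xi = xi'.
Proof.
move=> /is_updateP h /is_updateP h'; apply: cval_inj => z; by rewrite h h'.
Qed.

Lemma upd_ex (V : finType) (M : nat) (eta : config V M) x y cx u :
  x != y -> (cx + u <= cval eta x + cval eta y)%N ->
  is_update eta (mk eta x y (cx + u) (cval eta x + cval eta y - cx - u)) x y cx u.
Proof.
move=> hxy hle; apply/is_updateP => z; rewrite cval_mk //.
by rewrite -subnDA subnKC.
Qed.

Lemma sum_upd (R : realType) (V : finType) (M : nat) (eta : config V M) x y cx u :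
  x != y -> (cx + u <= cval eta x + cval eta y)%N ->
  \sum_(xi : config V M) ((is_update eta xi x y cx u)%:R : R) = 1.
Proof.
move=> hxy hle; have h := upd_ex hxy hle.
rewrite (bigD1 (mk eta x y (cx + u) (cval eta x + cval eta y - cx - u))) //= h big1 ?addr0 // => xi hne.
move: hne; case hx: (is_update _ _ _ _ _ _) => //.
by rewrite (upd_uniq hx h) eqxx.
Qed.

Lemma step_ge0 (R : realType) (V : finType) (e : rel V) (M : nat) (eta xi : config V M) :
  0 <= usm_step R e eta xi.
Proof.
rewrite /usm_step /=; case: ifP => _; first exact: ler0n.
apply: mulr_ge0; first by rewrite invr_ge0 ler0n.
apply: sumr_ge0 => p _; apply: sumr_ge0 => cx _; apply: sumr_ge0 => cy _.
apply: mulr_ge0; first by apply: mulr_ge0; rewrite invr_ge0 ler0n.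
apply: sumr_ge0 => u _; apply: mulr_ge0; [by rewrite invr_ge0 ler0n | exact: ler0n].
Qed.

Lemma sum_inv_const (R : realType) (n : nat) :
  \sum_(i < n.+1) (n.+1%:R : R)^-1 = 1.
Proof.
rewrite sumr_const card_ord -[_ *+ _]mulr_natr mulVf //.
by rewrite pnatr_eq0.
Qed.

Lemma step_sum1 (R : realType) (V : finType) (e : rel V) (M : nat) (eta : config V M) :
  irreflexive e ->
  \sum_xi usm_step R e eta xi = 1.
Proof.
move=> irr; rewrite /usm_step /=; set nE := #|_|; case hn: (nE == 0%N).
  rewrite (bigD1 eta) //= eqxx big1 ?addr0 //.
  by move=> xi hne; rewrite eq_sym; move/negbTE: hne => ->.
rewrite -mulr_sumr exchange_big /=.
have neq : forall j : V * V, e j.1 j.2 -> j.1 != j.2.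
  by move=> j hj; apply/eqP => h; rewrite h irr in hj.
rewrite (eq_bigr (fun _ => 1)); last first.
  move=> j hj; set a := cval eta j.1; set b := cval eta j.2.
  rewrite exchange_big /= (eq_bigr (fun cx => (a.+1%:R)^-1)) ?sum_inv_const // => cx _.
  rewrite exchange_big /= (eq_bigr (fun cy => (a.+1%:R)^-1 / b.+1%:R)); last first.
    move=> cy _; rewrite -mulr_sumr exchange_big /=.
    rewrite (eq_bigr (fun u => (a + b - cx - cy).+1%:R^-1)) ?sum_inv_const ?mulr1 //.
    move=> u _; rewrite -mulr_sumr sum_upd ?mulr1 //; first exact: neq.
    have := ltn_ord cx; have := ltn_ord u; rewrite /a /b; lia.
  by rewrite -mulr_sumr sum_inv_const mulr1.
rewrite sumr_const -[_ *+ _]mulr_natr mul1r mulVf //.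
by rewrite pnatr_eq0 hn.
Qed.

Lemma sumP_gt0 (R : realType) (I : finType) (P : pred I) (F : I -> R) i :
  P i -> (forall j, P j -> 0 <= F j) -> 0 < F i -> 0 < \sum_(j | P j) F j.
Proof.
move=> Pi h Fi; rewrite (bigD1 i) //=; apply: (lt_le_trans Fi).
rewrite lerDl; apply: sumr_ge0 => j /andP [Pj _]; exact: h.
Qed.

Lemma sum_gt0 (R : realType) (I : finType) (F : I -> R) i :
  (forall j, 0 <= F j) -> 0 < F i -> 0 < \sum_j F j.
Proof. move=> h Fi; exact: (@sumP_gt0 R I predT F i). Qed.

Lemma step_pos (R : realType) (V : finType) (e : rel V) (M : nat) (eta xi : config V M)
  x y cx u : irreflexive e -> e x y -> (cx <= cval eta x)%N ->
  (u <= cval eta x + cval eta y - cx)%N -> is_update eta xi x y cx u ->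
  0 < usm_step R e eta xi.
Proof.
move=> irr hxy hcx hu hup; rewrite /usm_step /=.
have -> : (#|[pred p : V * V | e p.1 p.2]| == 0%N) = false.
  by apply/negbTE; rewrite -lt0n; apply/card_gt0P; exists (x, y).
apply: mulr_gt0; first by rewrite invr_gt0 ltr0n; apply/card_gt0P; exists (x, y).
apply: (@sumP_gt0 _ _ _ _ (x, y)) => //=.
  move=> j _; apply: sumr_ge0 => cx' _; apply: sumr_ge0 => cy _.
  apply: mulr_ge0; first by apply: mulr_ge0; rewrite invr_ge0 ler0n.
  apply: sumr_ge0 => u' _; apply: mulr_ge0; [by rewrite invr_ge0 ler0n | exact: ler0n].
have hcx' : (cx < (cval eta x).+1)%N by [].
apply: (@sum_gt0 _ _ _ (Ordinal hcx')) => /=.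
  move=> cx'; apply: sumr_ge0 => cy _.
  apply: mulr_ge0; first by apply: mulr_ge0; rewrite invr_ge0 ler0n.
  apply: sumr_ge0 => u' _; apply: mulr_ge0; [by rewrite invr_ge0 ler0n | exact: ler0n].
apply: (@sum_gt0 _ _ _ ord0) => /=.
  move=> cy; apply: mulr_ge0; first by apply: mulr_ge0; rewrite invr_ge0 ler0n.
  apply: sumr_ge0 => u' _; apply: mulr_ge0; [by rewrite invr_ge0 ler0n | exact: ler0n].
apply: mulr_gt0; first by apply: mulr_gt0; rewrite invr_gt0 ltr0n.
have hu' : (u < (cval eta x + cval eta y - cx - 0).+1)%N by rewrite subn0 ltnS.
apply: (@sum_gt0 _ _ _ (Ordinal hu')) => /=.
  move=> u'; apply: mulr_ge0; [by rewrite invr_ge0 ler0n | exact: ler0n].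
by rewrite hup mulr1 invr_gt0 ltr0n.
Qed.

Lemma step_self (R : realType) (V : finType) (e : rel V) (M : nat) (eta : config V M) :
  irreflexive e -> 0 < usm_step R e eta eta.
Proof.
move=> irr; case hn: (#|[pred p : V * V | e p.1 p.2]| == 0%N).
  by rewrite /usm_step /= hn eqxx ltr01.
move/negbT: hn; rewrite -lt0n => /card_gt0P [[x y] /= hxy].
apply: (@step_pos R V e M eta eta x y (cval eta x) 0 irr hxy) => //.
apply/is_updateP => z; case: eqP => [->|_]; first by rewrite addn0.
case: eqP => [->|_] //; lia.
Qed.

Lemma law_ge0 (R : realType) (V : finType) (e : rel V) (M : nat) t (eta xi : config V M) :
  0 <= usm_law R e t eta xi.
Proof.
elim: t xi => [|t IH] xi /=; first exact: ler0n.
apply: sumr_ge0 => z _; apply: mulr_ge0 => //; exact: step_ge0.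
Qed.

Lemma law_sum1 (R : realType) (V : finType) (e : rel V) (M : nat) t (eta : config V M) :
  irreflexive e -> \sum_xi usm_law R e t eta xi = 1.
Proof.
move=> irr; elim: t => [|t IH] /=.
  rewrite (bigD1 eta) //= eqxx big1 ?addr0 //.
  by move=> xi hne; rewrite eq_sym; move/negbTE: hne => ->.
rewrite exchange_big /= -{}IH; apply: eq_bigr => z _.
by rewrite -mulr_sumr step_sum1 ?mulr1.
Qed.

Lemma law_CK (R : realType) (V : finType) (e : rel V) (M : nat) s t (eta xi : config V M) :
  usm_law R e (s + t) eta xi = \sum_z usm_law R e s eta z * usm_law R e t z xi.
Proof.
elim: t xi => [|t IH] xi /=.
  rewrite addn0 (bigD1 xi) //= eqxx mulr1 big1 ?addr0 //.
  by move=> z hne; move/negbTE: hne => ->; rewrite mulr0.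
rewrite addnS /=.
under eq_bigr => w _ do rewrite IH mulr_suml.
rewrite exchange_big /=; apply: eq_bigr => z _.
by rewrite mulr_sumr; apply: eq_bigr => w _; rewrite mulrA.
Qed.

Lemma law_step_pos (R : realType) (V : finType) (e : rel V) (M : nat) t (eta z xi : config V M) :
  0 < usm_law R e t eta z -> 0 < usm_step R e z xi -> 0 < usm_law R e t.+1 eta xi.
Proof.
move=> h1 h2 /=; apply: (@sum_gt0 _ _ _ z) => [w|]; last exact: mulr_gt0.
apply: mulr_ge0; [exact: law_ge0 | exact: step_ge0].
Qed.


Lemma move_step (R : realType) (V : finType) (e : rel V) (M : nat) (eta : config V M) x y :
  irreflexive e -> e x y -> exists eta1 : config V M,
  [/\ 0 < usm_step R e eta eta1, cval eta1 y = (cval eta x + cval eta y)%N,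
      cval eta1 x = 0%N & forall z, z != x -> z != y -> cval eta1 z = cval eta z].
Proof.
move=> irr hxy.
have nxy : x != y by apply/eqP => h; rewrite h irr in hxy.
have hs : (0 + (cval eta x + cval eta y) = cval eta x + cval eta y)%N by [].
exists (mk eta x y 0 (cval eta x + cval eta y)); split.
- apply: (@step_pos R V e M eta _ x y 0 0 irr hxy) => //.
  apply/is_updateP => z; rewrite (cval_mk _ nxy hs).
  by case: (z == x) => //; case: (z == y) => //; rewrite !subn0.
- by rewrite (cval_mk _ nxy hs) eq_sym (negbTE nxy) eqxx.
- by rewrite (cval_mk _ nxy hs) eqxx.
- by move=> z hzx hzy; rewrite (cval_mk _ nxy hs) (negbTE hzx) (negbTE hzy).
Qed.

Lemma path_move (R : realType) (V : finType) (e : rel V) (M : nat) (v0 : V) :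
  irreflexive e -> forall (p : seq V) (x : V), path e x p -> last x p = v0 -> x != v0 ->
  forall eta0 eta : config V M, (exists t, 0 < usm_law R e t eta0 eta) ->
  exists eta', (exists t, 0 < usm_law R e t eta0 eta') /\
     (cval eta v0 + cval eta x <= cval eta' v0)%N.
Proof.
move=> irr; elim=> [|y p IH] x /=; first by move=> _ -> /eqP.
move=> /andP [hxy hp] hl hxv eta0 eta [t ht].
have [eta1 [h1 h1y h1x h1o]] := @move_step R V e M eta x y irr hxy.
have r1 : exists t, 0 < usm_law R e t eta0 eta1 by exists t.+1; exact: law_step_pos ht h1.
have nxy : x != y by apply/eqP => h; rewrite h irr in hxy.
case: (eqVneq y v0) => [hy|hyv].
  by exists eta1; split => //; rewrite -hy h1y addnC.
have [eta' [r' h']] := IH y hp hl hyv eta0 eta1 r1.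
exists eta'; split => //; apply: leq_trans h'.
rewrite h1y h1o // ?(eq_sym v0) //; lia.
Qed.

Lemma conc_eq (V : finType) (M : nat) (v0 : V) (a b : config V M) :
  cval a v0 = M -> cval b v0 = M -> a = b.
Proof.
have h0 : forall c : config V M, cval c v0 = M -> forall z, z != v0 -> cval c z = 0%N.
  move=> c hc z hz; have hz' : v0 != z by rewrite eq_sym.
  have := split2 (cval c) hz'.
  rewrite cval_sum. rewrite hc. move: (cval c z) => u. move: (\sum_(_ | _) _)%N => w. move/eqP. rewrite -addnA. rewrite -{1}(addn0 M). rewrite eqn_add2l. rewrite eq_sym addn_eq0. case/andP => /eqP hu _. exact hu.
move=> ha hb; apply: cval_inj => z; case: (eqVneq z v0) => [->|hz].
  by rewrite ha hb.
rewrite (h0 a ha z hz). by rewrite (h0 b hb z hz).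
Qed.
Lemma conc_ex (V : finType) (M : nat) (v0 : V) : exists c : config V M, cval c v0 = M.
Proof.
pose f := [ffun z => inord (if z == v0 then M else 0) : 'I_M.+1].
have hf : (\sum_(z : V) (f z : nat))%N == M.
  rewrite (bigD1 v0) //= ffunE eqxx inordK // big1 ?addn0 //.
  by move=> z hz; rewrite ffunE (negbTE hz) inordK.
by exists (exist _ f hf); rewrite /cval /= ffunE eqxx inordK.
Qed.

Lemma reach_conc (R : realType) (V : finType) (e : rel V) (M : nat) (v0 : V) :
  irreflexive e -> (forall x y, connect e x y) ->
  forall n (eta0 eta : config V M), (M - cval eta v0 <= n)%N ->
  (exists t, 0 < usm_law R e t eta0 eta) ->
  forall c : config V M, cval c v0 = M -> exists t, 0 < usm_law R e t eta0 c.
Proof.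
move=> irr conn; elim=> [|n IH] eta0 eta hn hr c hc.
  have he : cval eta v0 = M by have := cval_le eta v0; lia.
  by rewrite -(conc_eq he hc).
case: (eqVneq (cval eta v0) M) => [he|hne].
  by rewrite -(conc_eq he hc).
case: (pickP (fun x => (x != v0) && (0 < cval eta x))%N) => [x /andP [hxv hx]|hnone].
  case/connectP: (conn x v0) => p hp hl.
  have [eta' [r' h']] := @path_move R V e M v0 irr p x hp (esym hl) hxv eta0 eta hr.
  apply: (IH eta0 eta') => //; lia.
have hs : (\sum_z cval eta z = cval eta v0)%N.
  rewrite (bigD1 v0) //= big1 ?addn0 // => z hz.
  have := hnone z; rewrite /= hz /= => /negbT; rewrite lt0n negbK => /eqP hz0; exact hz0.
by rewrite cval_sum in hs; rewrite -hs eqxx in hne.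
Qed.


Lemma pos_min (R : realType) (I : finType) (f : I -> R) :
  (forall x, 0 < f x) -> exists d, 0 < d /\ forall x, d <= f x.
Proof.
move=> hf.
suff : forall s : seq I, exists d, 0 < d /\ forall x, x \in s -> d <= f x.
  by case/(_ (enum I)) => d [hd h]; exists d; split => // x; apply: h; rewrite mem_enum.
elim=> [|y s [d [hd h]]]; first by exists 1; split.
exists (Num.min d (f y)); split; first by rewrite lt_min hd hf.
move=> x; rewrite in_cons => /orP [/eqP ->|hx]; rewrite ge_min.
  by rewrite lexx orbT.
by rewrite h.
Qed.

Lemma convex_bnd (R : realType) (S : finType) (Q g : S -> R) lo hi :
  (forall w, 0 <= Q w) -> \sum_w Q w = 1 -> (forall w, lo <= g w <= hi) ->
  lo <= \sum_w Q w * g w <= hi.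
Proof.
move=> hQ h1 hg; apply/andP; split.
  rewrite -[lo]mul1r -h1 mulr_suml; apply: ler_sum => w _.
  by apply: ler_wpM2l => //; case/andP: (hg w).
rewrite -[hi]mul1r -h1 mulr_suml; apply: ler_sum => w _.
by apply: ler_wpM2l => //; case/andP: (hg w).
Qed.

Lemma doeb (R : realType) (S : finType) (Q h : S -> R) (c : S) d :
  (forall w, 0 <= Q w) -> (forall w, 0 <= h w) -> 0 <= d -> d <= Q c ->
  d * h c <= \sum_w Q w * h w.
Proof.
move=> hQ hh hd hdc; rewrite (bigD1 c) //=.
apply: (le_trans (ler_wpM2r (hh c) hdc)).
rewrite lerDl; apply: sumr_ge0 => w _; exact: mulr_ge0.
Qed.

Lemma sum_shift (R : realType) (S : finType) (Q g : S -> R) a :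
  \sum_w Q w = 1 -> \sum_w Q w * (g w - a) = \sum_w Q w * g w - a.
Proof.
move=> h1; under eq_bigr do rewrite mulrBr.
by rewrite sumrB -mulr_suml h1 mul1r.
Qed.

Lemma sum_shift2 (R : realType) (S : finType) (Q g : S -> R) a :
  \sum_w Q w = 1 -> \sum_w Q w * (a - g w) = a - \sum_w Q w * g w.
Proof.
move=> h1; under eq_bigr do rewrite mulrBr.
by rewrite sumrB -mulr_suml h1 mul1r.
Qed.

Lemma doeb_step (R : realType) (S : finType) (Q g : S -> R) (c : S) d lo eps :
  (forall w, 0 <= Q w) -> \sum_w Q w = 1 -> 0 <= d -> d <= Q c ->
  (forall w, lo <= g w <= lo + eps) ->
  d * g c + (1 - d) * lo <= \sum_w Q w * g w <= d * g c + (1 - d) * lo + (1 - d) * eps.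
Proof.
move=> hQ h1 hd hdc hg.
have H1 : d * (g c - lo) <= \sum_w Q w * g w - lo.
  rewrite -sum_shift //; apply: (@doeb R S Q (fun w => g w - lo) c d) => // w.
  by rewrite subr_ge0; case/andP: (hg w).
have H2 : d * (lo + eps - g c) <= lo + eps - \sum_w Q w * g w.
  rewrite -sum_shift2 //; apply: (@doeb R S Q (fun w => lo + eps - g w) c d) => // w.
  by rewrite subr_ge0; case/andP: (hg w).
apply/andP; split; nra.
Qed.

Lemma le_one (R : realType) (S : finType) (Q : S -> R) b :
  (forall w, 0 <= Q w) -> \sum_w Q w = 1 -> Q b <= 1.
Proof.
move=> h0 h1; rewrite -h1 (bigD1 b) //= lerDl; exact: sumr_ge0.
Qed.

Lemma interval (R : realType) (S : finType) (L : nat -> S -> S -> R) (K : nat) (c b : S) d :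
  (forall t a w, 0 <= L t a w) -> (forall t a, \sum_w L t a w = 1) ->
  (forall s t a w, L (s + t)%N a w = \sum_z L s a z * L t z w) ->
  0 <= d -> (forall a, d <= L K a c) ->
  forall n, exists lo, forall s a, lo <= L (s + n * K)%N a b <= lo + (1 - d) ^+ n.
Proof.
move=> h0 h1 hCK hd0 hd n.
suff [lo hlo] : exists lo, forall a, lo <= L (n * K)%N a b <= lo + (1 - d) ^+ n.
  exists lo => s a; rewrite hCK; apply: convex_bnd => //; exact: hlo.
elim: n => [|n [lo IH]].
  exists 0 => a; rewrite mul0n add0r expr0 h0 /=; apply: le_one => //.
exists (d * L (n * K)%N c b + (1 - d) * lo) => a.
rewrite mulSn hCK exprS; apply: doeb_step => //; exact: IH.
Qed.

Lemma key_cauchy (R : realType) (S : finType) (L : nat -> S -> S -> R) (K : nat) (c b : S) d :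
  (forall t a w, 0 <= L t a w) -> (forall t a, \sum_w L t a w = 1) ->
  (forall s t a w, L (s + t)%N a w = \sum_z L s a z * L t z w) ->
  0 < d -> (forall a, d <= L K a c) ->
  forall eps, 0 < eps -> exists N, forall t t' a a', (N <= t)%N -> (N <= t')%N ->
    `|L t a b - L t' a' b| < eps.
Proof.
move=> h0 h1 hCK hd0 hd eps heps.
have hd1 : d <= 1 by apply: (le_trans (hd c)); apply: le_one.
have hz : `|1 - d| < 1 by rewrite ger0_norm; lra.
have := cvg_expr hz; move/cvgrPdist_lt => /(_ eps heps) [N0 _ hN0].
have := hN0 N0 (leqnn N0); rewrite /= sub0r normrN ger0_norm; last first.
  apply: exprn_ge0; lra.
move=> hlt.
have [lo hlo] := interval b h0 h1 hCK (ltW hd0) hd N0.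
exists (N0 * K)%N => t t' a a' ht ht'.
have := hlo (t - N0 * K)%N a; have := hlo (t' - N0 * K)%N a'.
rewrite !subnK // => /andP [ha1 ha2] /andP [hb1 hb2].
rewrite ltr_norml; apply/andP; split; lra.
Qed.

Lemma ergodic (R : realType) (S : finType) (L : nat -> S -> S -> R) (K : nat) (c : S) d :
  (forall t a w, 0 <= L t a w) -> (forall t a, \sum_w L t a w = 1) ->
  (forall s t a w, L (s + t)%N a w = \sum_z L s a z * L t z w) ->
  0 < d -> (forall a, d <= L K a c) ->
  forall b, forall a, (fun t => L t a b) @ \oo --> lim ((fun t => L t c b) @ \oo).
Proof.
move=> h0 h1 hCK hd0 hd b.
have kc := key_cauchy b h0 h1 hCK hd0 hd.
have cc : cvg ((fun t => L t c b) @ \oo).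
  apply/cauchy_cvgP; apply: cauchy_exP => eps heps.
  have [N hN] := kc eps heps.
  exists (L N c b); exists N => // t /= ht.
  rewrite /ball /=; exact: hN.
move=> a; apply/cvgrPdist_lt => eps heps.
have := (cvgrPdist_lt _ _).1 cc (eps / 2); case; first by rewrite divr_gt0.
move=> N1 _ hN1.
have [N hN] := kc (eps / 2) (divr_gt0 heps (ltr0Sn _ 1)).
exists (maxn N1 N) => // t /= ht.
have h1' := hN1 t (leq_trans (leq_maxl _ _) ht).
have h2' := hN t t c a (leq_trans (leq_maxr _ _) ht) (leq_trans (leq_maxr _ _) ht).
apply: (le_lt_trans (ler_distD (L t c b) _ _)).
by rewrite [eps](splitr eps) ltrD.
Qed.


Lemma cvg_fsum (R : realType) (I : finType) (f : I -> nat -> R) (l : I -> R) :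
  (forall i, f i @ \oo --> l i) ->
  (fun t => \sum_i f i t) @ \oo --> \sum_i l i.
Proof.
move=> hf.
suff H : forall s : seq I, (fun t => \sum_(i <- s) f i t) @ \oo --> \sum_(i <- s) l i.
  exact: H.
elim=> [|i s IH].
  under eq_fun do rewrite big_nil. rewrite big_nil; exact: cvg_cst.
under eq_fun do rewrite big_cons. rewrite big_cons; exact: cvgD.
Qed.

Theorem lemma5 (R : realType) (V : finType) (e : rel V) (M : nat) :
  (0 < #|V|)%N -> symmetric e -> irreflexive e ->
  (forall x y : V, connect e x y) ->
  exists pi : config V M -> R,
    [/\ @usm_stationary R V e M pi,
        (forall pi' : config V M -> R, @usm_stationary R V e M pi' -> pi' = pi) &
        (forall xi eta : config V M,
           (fun t : nat => @usm_law R V e M t eta xi) @ \oo --> pi xi)].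
Proof.
move=> hV _ irr conn.
have [v0 _] := card_gt0P hV.
have [c hc] := @conc_ex V M v0.
have reach : forall eta : config V M, exists t, 0 < usm_law R e t eta c.
  move=> eta; apply: (@reach_conc R V e M v0 irr conn M eta eta) => //.
    exact: leq_subr.
  by exists 0%N; rewrite /= eqxx ltr01.
have mono : forall eta t s, 0 < usm_law R e t eta c -> 0 < usm_law R e (s + t) eta c.
  move=> eta t s ht; elim: s => [|s IH] //; rewrite addSn.
  exact: (law_step_pos IH (@step_self R V e M c irr)).
pose tt (eta : config V M) := xchoose (reach eta).
pose K := (\max_(eta : config V M) tt eta)%N.
have hK : forall eta, 0 < usm_law R e K eta c.
  move=> eta; rewrite /K -(subnK (@leq_bigmax _ tt eta)).
  apply: mono; exact: (xchooseP (reach eta)).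
have [d [hd0 hd]] := pos_min hK.
pose L := fun t => @usm_law R V e M t.
have h0 : forall t a w, 0 <= L t a w by move=> *; exact: law_ge0.
have h1 : forall t a, \sum_w L t a w = 1 by move=> *; exact: law_sum1.
have hCK : forall s t a w, L (s + t)%N a w = \sum_z L s a z * L t z w.
  by move=> *; exact: law_CK.
have conv := ergodic h0 h1 hCK hd0 hd.
pose pi xi := lim ((fun t => L t c xi) @ \oo).
have hconv : forall xi eta, (fun t => usm_law R e t eta xi) @ \oo --> pi xi.
  move=> xi eta; exact: conv.
have pi_ge0 : forall xi, 0 <= pi xi.
  move=> xi; apply: (cvgr_to_ge (hconv xi c)); apply: nearW => t; exact: law_ge0.
have pi_sum : \sum_xi pi xi = 1.
  have := cvg_fsum (fun xi => hconv xi c).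
  under eq_fun do rewrite law_sum1 //.
  move=> H; apply/esym; exact: (cvg_unique (@Rhausdorff R) (@cvg_cst _ (1:R) nat \oo _) H).
have pi_stat : forall xi, \sum_eta pi eta * usm_step R e eta xi = pi xi.
  move=> xi.
  have H1 : (fun t => usm_law R e t.+1 c xi) @ \oo --> pi xi.
    by rewrite (cvg_shiftS (fun t => usm_law R e t c xi)).
  have H2 : (fun t => usm_law R e t.+1 c xi) @ \oo --> \sum_eta pi eta * usm_step R e eta xi.
    have hm : forall eta, (fun t => usm_law R e t c eta * usm_step R e eta xi) @ \oo --> pi eta * usm_step R e eta xi.
      move=> eta; exact: cvgMr_tmp (hconv eta c).
    have := cvg_fsum hm.
    by apply: cvg_trans; apply: cvg_id.
  exact: (cvg_unique (@Rhausdorff R) H2 H1).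
exists pi; split.
- by split.
- move=> pi' [h0' [h1' hs']].
  have inv : forall t xi, \sum_eta pi' eta * usm_law R e t eta xi = pi' xi.
    elim=> [|t IH] xi /=.
      rewrite (bigD1 xi) //= eqxx mulr1 big1 ?addr0 //.
      by move=> z hne; move/negbTE: hne => ->; rewrite mulr0.
    rewrite -[RHS]hs'; under eq_bigr do rewrite mulr_sumr.
    rewrite exchange_big /=; apply: eq_bigr => z _.
    by rewrite -IH mulr_suml; apply: eq_bigr => w _; rewrite mulrA.
  apply: boolp.funext => xi.
  have hm : forall eta, (fun t => pi' eta * usm_law R e t eta xi) @ \oo --> pi' eta * pi xi.
    move=> eta; apply: cvgM; [exact: cvg_cst | exact: hconv].
  have := cvg_fsum hm.
  under eq_fun do rewrite inv.
  move=> H; have := cvg_unique (@Rhausdorff R) (@cvg_cst _ (pi' xi) nat \oo _) H.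
  by move=> ->; rewrite -mulr_suml h1' mul1r.
- exact: hconv.
Qed.
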